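(* Let $\Omega\subset\mathbb{R}^n$ be a bounded open convex set with smooth boundary, let $\Lambda>0$, and let $u$ be a nonconstant continuous viscosity solution of $(N_\Lambda)$ normalized so that $\max_{\overline\Omega}u=\frac1\Lambda$. Then $$|x-x_0|\ge u(x)\qquad\text{for all } x\in\overline\Omega \text{ with } u(x)\ge0 \text{ and all } x_0\in\Omega \text{ with } u(x_0)\le0 .$$ Consequently $\sup_{x\in\overline{\Omega_+}}\operatorname{dist}(x,\{u=0\})\ge\frac1\Lambda$, where $\Omega_+=\{x\in\Omega:u(x)>0\}$.
   Context: $\nu$ denotes the outer unit normal to $\partial\Omega$, and $\Delta_\infty u=\sum_{i,j=1}^n u_{x_i}u_{x_ix_j}u_{x_j}$. For $\Lambda\ge 0$, problem $(N_\Lambda)$ is $$\min\{|\nabla u|-\Lambda|u|,-\Delta_\infty u\}=0 \text{ in }\{u>0\}\cap\Omega,\quad \max\{\Lambda|u|-|\nabla u|,-\Delta_\infty u\}=0 \text{ in }\{u<0\}\cap\Omega,\quad -\Delta_\infty u=0 \text{ in }\{u=0\}\cap\Omega,\quad \tfrac{\partial u}{\partial\nu}=0 \text{ on }\partial\Omega,$$ understood in the viscosity sense as follows. For $s\in\mathbb{R}$, $\xi\in\mathbb{R}^n$, $X$ a symmetric $n\times n$ matrix, let $F(s,\xi,X)=\min\{|\xi|-\Lambda|s|,-\langle X\xi,\xi\rangle\}$, $G(s,\xi,X)=\max\{\Lambda|s|-|\xi|,-\langle X\xi,\xi\rangle\}$, $H(X)=-\langle X\xi,\xi\rangle$ (evaluated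 at the same $\xi$). For a function $u$ and point $x_0$, let $E$ denote $F$ if $u(x_0)>0$, $G$ if $u(x_0)<0$, $H$ if $u(x_0)=0$. An upper semicontinuous $u$ on $\overline\Omega$ is a viscosity subsolution if: for every $x_0\in\Omega$ and $\phi\in C^2(\Omega)$ with $\phi(x_0)=u(x_0)$ and $u(x)<\phi(x)$ for $x\neq x_0$, one has $E(\phi(x_0),\nabla\phi(x_0),\nabla^2\phi(x_0))\le 0$; and for every $x_0\in\partial\Omega$ and $\phi\in C^2(\overline\Omega)$ with the same touching property, $\min\{E(\phi(x_0),\nabla\phi(x_0),\nabla^2\phi(x_0)),\frac{\partial\phi}{\partial\nu}(x_0)\}\le 0$. A lower semicontinuous $u$ is a viscosity supersolution if the same holds with $u(x)>\phi(x)$ for $x\ne x_0$, with ''$E\le 0$'' replaced by ''$E\ge 0$'' at interior points and with $\max\{E(\phi(x_0),\nabla\phi(x_0),\nabla^2\phi(x_0)),\frac{\partial\phi}{\partial\nu}(x_0)\}\ge 0$ at boundary points. A continuous $u$ is a viscosity solution if it is both a sub- and a supersolution. *)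

(* Defs.v *)
From Stdlib Require Import Reals.
From mathcomp Require Import ssreflect ssrbool ssrfun eqtype ssrnat seq fintype bigop.
Set Implicit Arguments. Unset Strict Implicit.
Local Open Scope R_scope.

Definition Rn (n : nat) := 'I_n -> R.

Definition vadd {n} (x y : Rn n) : Rn n := fun i => x i + y i.
Definition vsub {n} (x y : Rn n) : Rn n := fun i => x i - y i.
Definition vscal {n} (t : R) (x : Rn n) : Rn n := fun i => t * x i.
Definition vdot {n} (x y : Rn n) : R := \big[Rplus/0]_(i < n) (x i * y i).
Definition vnorm {n} (x : Rn n) : R := sqrt (vdot x x).
Definition vdist {n} (x y : Rn n) : R := vnorm (vsub x y).
Definition ebasis {n} (i : 'I_n) : Rn n := fun j => if j == i then 1 else 0.

Definition quadform {n} (X : 'I_n -> 'I_n -> R) (xi : Rn n) : R :=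
  \big[Rplus/0]_(i < n) \big[Rplus/0]_(j < n) (X i j * xi i * xi j).

Definition is_open {n} (U : Rn n -> Prop) : Prop :=
  forall x, U x -> exists r, 0 < r /\ forall y, vdist y x < r -> U y.
Definition is_bounded {n} (U : Rn n -> Prop) : Prop :=
  exists M, forall x, U x -> vnorm x <= M.
Definition is_convex {n} (U : Rn n -> Prop) : Prop :=
  forall x y t, U x -> U y -> 0 <= t <= 1 -> U (vadd x (vscal t (vsub y x))).
Definition closure {n} (U : Rn n -> Prop) (x : Rn n) : Prop :=
  forall eps, 0 < eps -> exists y, U y /\ vdist y x < eps.
Definition boundary {n} (U : Rn n -> Prop) (x : Rn n) : Prop :=
  closure U x /\ forall eps, 0 < eps -> exists y, ~ U y /\ vdist y x < eps.

Definition continuous_on {n} (U : Rn n -> Prop) (f : Rn n -> R) : Prop :=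
  forall x, U x -> forall eps, 0 < eps -> exists delta, 0 < delta /\
    forall y, U y -> vdist y x < delta -> Rabs (f y - f x) < eps.

Definition has_partial {n} (i : 'I_n) (f : Rn n -> R) (x : Rn n) (l : R) : Prop :=
  derivable_pt_lim (fun t => f (vadd x (vscal t (ebasis i)))) 0 l.

Fixpoint Ck_on {n} (k : nat) (U : Rn n -> Prop) (f : Rn n -> R) : Prop :=
  continuous_on U f /\
  match k with
  | O => True
  | S k' => exists g : 'I_n -> Rn n -> R,
      (forall i x, U x -> has_partial i f x (g i x)) /\ forall i, Ck_on k' U (g i)
  end.
Definition smooth_on {n} (U : Rn n -> Prop) (f : Rn n -> R) : Prop :=
  forall k, Ck_on k U f.

Definition C2_data {n} (U : Rn n -> Prop) (f : Rn n -> R)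
  (Df : 'I_n -> Rn n -> R) (D2f : 'I_n -> 'I_n -> Rn n -> R) : Prop :=
  continuous_on U f /\
  (forall i x, U x -> has_partial i f x (Df i x)) /\
  (forall i, continuous_on U (Df i)) /\
  (forall i j x, U x -> has_partial j (Df i) x (D2f i j x)) /\
  (forall i j, continuous_on U (D2f i j)).

Definition ball {n} (x : Rn n) (r : R) (y : Rn n) : Prop := vdist y x < r.

Definition local_defining {n} (Omega : Rn n -> Prop) (x0 : Rn n) (r : R)
  (rho : Rn n -> R) (Drho : 'I_n -> Rn n -> R) : Prop :=
  0 < r /\ smooth_on (ball x0 r) rho /\
  (forall i x, ball x0 r x -> has_partial i rho x (Drho i x)) /\
  (forall y, ball x0 r y -> (Omega y <-> rho y < 0)) /\
  (exists i, Drho i x0 <> 0).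

Definition smooth_boundary {n} (Omega : Rn n -> Prop) : Prop :=
  forall x0, boundary Omega x0 -> exists r rho Drho, local_defining Omega x0 r rho Drho.

Definition outer_unit_normal {n} (Omega : Rn n -> Prop) (x0 nu : Rn n) : Prop :=
  exists r rho Drho, local_defining Omega x0 r rho Drho /\
    nu = vscal (/ vnorm (fun i => Drho i x0)) (fun i => Drho i x0).

Definition opF {n} (Lam s : R) (xi : Rn n) (X : 'I_n -> 'I_n -> R) : R :=
  Rmin (vnorm xi - Lam * Rabs s) (- quadform X xi).
Definition opG {n} (Lam s : R) (xi : Rn n) (X : 'I_n -> 'I_n -> R) : R :=
  Rmax (Lam * Rabs s - vnorm xi) (- quadform X xi).
Definition opH {n} (xi : Rn n) (X : 'I_n -> 'I_n -> R) : R := - quadform X xi.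
Definition opE {n} (Lam ux0 s : R) (xi : Rn n) (X : 'I_n -> 'I_n -> R) : R :=
  match Rcase_abs ux0 with
  | left _ => opG Lam s xi X
  | right _ => if Req_EM_T ux0 0 then opH xi X
               else opF Lam s xi X
  end.

Definition usc_on {n} (U : Rn n -> Prop) (u : Rn n -> R) : Prop :=
  forall x, U x -> forall eps, 0 < eps -> exists delta, 0 < delta /\
    forall y, U y -> vdist y x < delta -> u y < u x + eps.
Definition lsc_on {n} (U : Rn n -> Prop) (u : Rn n -> R) : Prop :=
  forall x, U x -> forall eps, 0 < eps -> exists delta, 0 < delta /\
    forall y, U y -> vdist y x < delta -> u x - eps < u y.

Definition visc_subsolution {n} (Lam : R) (Omega : Rn n -> Prop) (u : Rn n -> R) : Prop :=
  usc_on (closure Omega) u /\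
  (forall x0 phi Dphi D2phi, Omega x0 -> C2_data Omega phi Dphi D2phi ->
     phi x0 = u x0 -> (forall x, Omega x -> x <> x0 -> u x < phi x) ->
     opE Lam (u x0) (phi x0) (fun i => Dphi i x0) (fun i j => D2phi i j x0) <= 0) /\
  (forall x0 (V : Rn n -> Prop) phi Dphi D2phi, boundary Omega x0 ->
     is_open V -> (forall x, closure Omega x -> V x) -> C2_data V phi Dphi D2phi ->
     phi x0 = u x0 -> (forall x, closure Omega x -> x <> x0 -> u x < phi x) ->
     forall nu, outer_unit_normal Omega x0 nu ->
     Rmin (opE Lam (u x0) (phi x0) (fun i => Dphi i x0) (fun i j => D2phi i j x0))
          (vdot (fun i => Dphi i x0) nu) <= 0).

Definition visc_supersolution {n} (Lam : R) (Omega : Rn n -> Prop) (u : Rn n -> R) : Prop :=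
  lsc_on (closure Omega) u /\
  (forall x0 phi Dphi D2phi, Omega x0 -> C2_data Omega phi Dphi D2phi ->
     phi x0 = u x0 -> (forall x, Omega x -> x <> x0 -> u x > phi x) ->
     opE Lam (u x0) (phi x0) (fun i => Dphi i x0) (fun i j => D2phi i j x0) >= 0) /\
  (forall x0 (V : Rn n -> Prop) phi Dphi D2phi, boundary Omega x0 ->
     is_open V -> (forall x, closure Omega x -> V x) -> C2_data V phi Dphi D2phi ->
     phi x0 = u x0 -> (forall x, closure Omega x -> x <> x0 -> u x > phi x) ->
     forall nu, outer_unit_normal Omega x0 nu ->
     Rmax (opE Lam (u x0) (phi x0) (fun i => Dphi i x0) (fun i j => D2phi i j x0))
          (vdot (fun i => Dphi i x0) nu) >= 0).

Definition visc_solution {n} (Lam : R) (Omega : Rn n -> Prop) (u : Rn n -> R) : Prop :=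
  continuous_on (closure Omega) u /\
  visc_subsolution Lam Omega u /\ visc_supersolution Lam Omega u.

(* Main.v *)
Require Import Defs.
From Stdlib Require Import Reals.
From mathcomp Require Import ssreflect ssrbool ssrfun eqtype ssrnat seq fintype bigop.
From Stdlib Require Import Lra Psatz FunctionalExtensionality ClassicalEpsilon Classical.
From HB Require Import structures.
Set Implicit Arguments. Unset Strict Implicit.
Local Open Scope R_scope.

HB.instance Definition _ := Monoid.isComLaw.Build R 0 Rplus (fun a b c => esym (Rplus_assoc a b c)) Rplus_comm Rplus_0_l.

Lemma sumR_split (n : nat) (f g : 'I_n -> R) :
  \big[Rplus/0]_(i < n) (f i + g i) = \big[Rplus/0]_(i < n) f i + \big[Rplus/0]_(i < n) g i.
Proof. by rewrite big_split. Qed.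

Lemma sumR_scal (n : nat) (c : R) (f : 'I_n -> R) :
  \big[Rplus/0]_(i < n) (c * f i) = c * \big[Rplus/0]_(i < n) f i.
Proof.
elim/big_rec2: _ => [|i a b _ ->]; first lra. lra.
Qed.

Lemma sumR_le (n : nat) (f g : 'I_n -> R) : (forall i, f i <= g i) ->
  \big[Rplus/0]_(i < n) f i <= \big[Rplus/0]_(i < n) g i.
Proof. move=> H; elim/big_rec2: _ => [|i a b _ Hab]; first lra. by have := H i; lra. Qed.

Lemma sumR_ind (n : nat) (f : 'I_n -> R) (i : 'I_n) :
  \big[Rplus/0]_(k < n) (f k * (if k == i then 1 else 0)) = f i.
Proof.
rewrite (bigD1 i) //= eqxx big1; first lra.
by move=> k /negbTE ->; lra.
Qed.

Lemma sumR_ge0 (n : nat) (f : 'I_n -> R) : (forall i, 0 <= f i) ->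
  0 <= \big[Rplus/0]_(i < n) f i.
Proof. move=> H; elim/big_rec: _ => [|i a _ Ha]; first lra. by have := H i; lra. Qed.

Lemma sumR_const (n : nat) (c : R) : \big[Rplus/0]_(i < n) c = INR n * c.
Proof.
rewrite big_const_ord. elim: n => [|n IH]; first by simpl; lra.
rewrite iterS IH S_INR; lra.
Qed.

Lemma sumR_opp (n : nat) (f : 'I_n -> R) :
  \big[Rplus/0]_(i < n) (- f i) = - \big[Rplus/0]_(i < n) f i.
Proof. elim/big_rec2: _ => [|i a b _ ->]; lra. Qed.

Lemma sumR_abs (n : nat) (f : 'I_n -> R) :
  Rabs (\big[Rplus/0]_(i < n) f i) <= \big[Rplus/0]_(i < n) Rabs (f i).
Proof.
elim/big_rec2: _ => [|i a b _ Hab]; first by rewrite Rabs_R0; lra.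
by apply: Rle_trans (Rabs_triang _ _) _; lra.
Qed.

Lemma sumR_term_le (n : nat) (f : 'I_n -> R) (i : 'I_n) : (forall k, 0 <= f k) ->
  f i <= \big[Rplus/0]_(k < n) f k.
Proof.
move=> H; rewrite (bigD1 i) //=.
have : 0 <= \big[Rplus/0]_(k < n | k != i) f k.
  by elim/big_rec: _ => [|k a _ Ha]; [lra | have := H k; lra].
move=> Hs; rewrite -[X in X <= _]Rplus_0_r; exact: Rplus_le_compat_l.
Qed.

Lemma sumR_sq_le (n : nat) (f : 'I_n -> R) : (forall k, 0 <= f k) ->
  \big[Rplus/0]_(k < n) (f k * f k) <= (\big[Rplus/0]_(k < n) f k) * (\big[Rplus/0]_(k < n) f k).
Proof.
move=> H.
suff : \big[Rplus/0]_(k < n) (f k * f k) <= (\big[Rplus/0]_(k < n) f k) * (\big[Rplus/0]_(k < n) f k)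
  /\ 0 <= \big[Rplus/0]_(k < n) f k by case.
elim/big_rec2: _ => [|i a b _ [Hab Hb]]; first lra.
have := H i => Hi. split; nra.
Qed.

Definition l1 {n} (x : Rn n) : R := \big[Rplus/0]_(i < n) Rabs (x i).

Lemma vdot_ge0 n (x : Rn n) : 0 <= vdot x x.
Proof. apply: sumR_ge0 => i; nra. Qed.

Lemma vnorm_ge0 n (x : Rn n) : 0 <= vnorm x.
Proof. exact: sqrt_pos. Qed.

Lemma coord_le_vnorm n (x : Rn n) i : Rabs (x i) <= vnorm x.
Proof.
rewrite /vnorm -(sqrt_Rsqr_abs (x i)). apply: sqrt_le_1_alt.
rewrite /Rsqr.
rewrite /vdot; apply: (@sumR_term_le n (fun k => x k * x k) i) => k; nra.
Qed.

Lemma vnorm_le_l1 n (x : Rn n) : vnorm x <= l1 x.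
Proof.
rewrite /vnorm /l1.
have H0 : 0 <= \big[Rplus/0]_(i < n) Rabs (x i) by apply: sumR_ge0 => i; exact: Rabs_pos.
rewrite -(sqrt_square (\big[Rplus/0]_(i < n) Rabs (x i))) //.
apply: sqrt_le_1_alt.
have -> : vdot x x = \big[Rplus/0]_(k < n) (Rabs (x k) * Rabs (x k)).
  by apply: eq_bigr => i _; rewrite -Rabs_mult Rabs_right //; nra.
apply: sumR_sq_le => k; exact: Rabs_pos.
Qed.

Lemma l1_le_vnorm n (x : Rn n) : l1 x <= INR n * vnorm x.
Proof.
rewrite /l1 -sumR_const. apply: sumR_le => i; exact: coord_le_vnorm.
Qed.

Lemma coord_le_vdist n (x y : Rn n) i : Rabs (x i - y i) <= vdist x y.
Proof. by have := coord_le_vnorm (vsub x y) i. Qed.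

Lemma vdist_le_l1 n (x y : Rn n) : vdist x y <= \big[Rplus/0]_(i < n) Rabs (x i - y i).
Proof. by have := vnorm_le_l1 (vsub x y). Qed.

Lemma l1_le_vdist n (x y : Rn n) : \big[Rplus/0]_(i < n) Rabs (x i - y i) <= INR n * vdist x y.
Proof. by have := l1_le_vnorm (vsub x y). Qed.

Lemma vdist_sym n (x y : Rn n) : vdist x y = vdist y x.
Proof.
rewrite /vdist /vnorm /vdot; congr sqrt; apply: eq_bigr => i _; rewrite /vsub; nra.
Qed.

Lemma vdist_ge0 n (x y : Rn n) : 0 <= vdist x y.
Proof. exact: vnorm_ge0. Qed.

Lemma vdist_xx n (x : Rn n) : vdist x x = 0.
Proof.
rewrite /vdist /vnorm /vdot big1 ?sqrt_0 // => i _; rewrite /vsub; lra.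
Qed.

Lemma vdist_eq0 n (x y : Rn n) : vdist x y = 0 -> x = y.
Proof.
move=> H; apply: functional_extensionality => i.
have := coord_le_vdist x y i; rewrite H => Hi.
have := Rabs_pos (x i - y i). move: Hi. split_Rabs; lra.
Qed.

Lemma vdist_wtri n (x y z : Rn n) : vdist x z <= INR n * (vdist x y + vdist y z).
Proof.
apply: Rle_trans (vdist_le_l1 _ _) _.
apply: Rle_trans (_ : \big[Rplus/0]_(i < n) (Rabs (x i - y i) + Rabs (y i - z i)) <= _).
  apply: sumR_le => i; apply: Rle_trans (Rabs_triang _ _); right; congr Rabs; ring.
rewrite sumR_split Rmult_plus_distr_l.
apply: Rplus_le_compat; [exact: l1_le_vdist | exact: l1_le_vdist].
Qed.

Definition gcont {n} (f : Rn n -> R) := forall x eps, 0 < eps -> exists delta, 0 < delta /\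
  forall y, vdist y x < delta -> Rabs (f y - f x) < eps.

Lemma gcont_on n (U : Rn n -> Prop) f : gcont f -> continuous_on U f.
Proof. move=> H x _ eps He; have [d [Hd Hy]] := H x eps He; exists d; split => // y _; exact: Hy. Qed.

Lemma gcont_ext n (f g : Rn n -> R) : (forall x, f x = g x) -> gcont f -> gcont g.
Proof. move=> E H x eps He; have [d [Hd Hy]] := H x eps He; exists d; split => // y Hyx; rewrite -!E; exact: Hy. Qed.

Lemma gcont_const n (c : R) : gcont (fun _ : Rn n => c).
Proof. move=> x eps He; exists 1; split; first lra. move=> y _; rewrite Rminus_diag Rabs_R0 //. Qed.

Lemma gcont_coord n (k : 'I_n) : gcont (fun x : Rn n => x k).
Proof. move=> x eps He; exists eps; split => // y Hy; have := coord_le_vdist y x k; lra. Qed.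

Lemma gcont_comp1 n (f : Rn n -> R) (h : R -> R) :
  (forall x, continuity_pt h (f x)) -> gcont f -> gcont (fun x => h (f x)).
Proof.
move=> Hh Hf x eps He.
have [a [Ha Hx]] := Hh x eps He.
have [d [Hd Hy]] := Hf x a Ha.
exists d; split => // y Hyx.
case: (Req_dec (f y) (f x)) => E; first by rewrite E Rminus_diag Rabs_R0.
apply: (Hx (f y)); split; first by split; [done | apply: not_eq_sym].
exact: Hy.
Qed.

Lemma gcont_plus n (f g : Rn n -> R) : gcont f -> gcont g -> gcont (fun x => f x + g x).
Proof.
move=> Hf Hg x eps He.
have [d1 [Hd1 H1]] := Hf x (eps/2) ltac:(lra).
have [d2 [Hd2 H2]] := Hg x (eps/2) ltac:(lra).
exists (Rmin d1 d2); split; first exact: Rmin_pos.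
move=> y Hy.
have := H1 y (Rlt_le_trans _ _ _ Hy (Rmin_l _ _)).
have := H2 y (Rlt_le_trans _ _ _ Hy (Rmin_r _ _)).
move=> A B; apply: Rle_lt_trans (_ : Rabs (f y - f x) + Rabs (g y - g x) < _); last lra.
apply: Rle_trans (Rabs_triang _ _); right; congr Rabs; ring.
Qed.

Lemma dlim_cont h z l : derivable_pt_lim h z l -> continuity_pt h z.
Proof. move=> H; apply: derivable_continuous_pt; exists l; exact H. Qed.

Lemma cont_sq (z : R) : continuity_pt (fun z => z * z) z.
Proof. apply: dlim_cont; apply: (derivable_pt_lim_mult id id); apply: derivable_pt_lim_id. Qed.

Lemma gcont_scal n (c : R) (f : Rn n -> R) : gcont f -> gcont (fun x => c * f x).
Proof.
move=> Hf; apply: (gcont_comp1 (h := fun z => c * z)) => // x.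
apply: dlim_cont; apply: (derivable_pt_lim_scal id); apply: derivable_pt_lim_id.
Qed.

Lemma gcont_mult n (f g : Rn n -> R) : gcont f -> gcont g -> gcont (fun x => f x * g x).
Proof.
move=> Hf Hg.
apply: (gcont_ext (f := fun x => /4 * ((f x + g x) * (f x + g x)) + (-/4) * ((f x + (-1) * g x) * (f x + (-1) * g x)))).
  move=> x; field.
apply: gcont_plus; apply: gcont_scal; apply: (gcont_comp1 (h := fun z => z * z)).
- move=> ?; exact: cont_sq.
- exact: gcont_plus.
- move=> ?; exact: cont_sq.
- apply: gcont_plus => //; exact: gcont_scal.
Qed.

Lemma gcont_sum n (I : eqType) (r : seq I) (P : pred I) (F : I -> Rn n -> R) :
  (forall k, gcont (F k)) -> gcont (fun x => \big[Rplus/0]_(k <- r | P k) F k x).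
Proof.
move=> H; elim: r => [|a r IH].
  apply: (gcont_ext (f := fun _ => 0)); [by move=> x; rewrite big_nil | exact: gcont_const].
case: (boolP (P a)) => Pa.
  apply: (gcont_ext (f := fun x => F a x + \big[Rplus/0]_(k <- r | P k) F k x)).
    by move=> x; rewrite big_cons Pa.
  exact: gcont_plus.
apply: (gcont_ext (f := fun x => \big[Rplus/0]_(k <- r | P k) F k x)) => //.
by move=> x; rewrite big_cons (negbTE Pa).
Qed.

Lemma vadd_scal0 n (x v : Rn n) : vadd x (vscal 0 v) = x.
Proof. apply: functional_extensionality => i; rewrite /vadd /vscal; ring. Qed.

Lemma hp_ext n i (f g : Rn n -> R) x l : (forall y, f y = g y) -> has_partial i f x l -> has_partial i g x l.
Proof.
move=> E; rewrite /has_partial.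
have -> : (fun t => g (vadd x (vscal t (ebasis i)))) = (fun t => f (vadd x (vscal t (ebasis i)))).
  by apply: functional_extensionality => t; rewrite E.
done.
Qed.

Lemma hp_eq n i (f : Rn n -> R) x l l' : has_partial i f x l -> l = l' -> has_partial i f x l'.
Proof. by move=> H <-. Qed.

Lemma hp_const n i (c : R) (x : Rn n) : has_partial i (fun _ => c) x 0.
Proof. exact: derivable_pt_lim_const. Qed.

Lemma hp_coord n i (k : 'I_n) (x : Rn n) :
  has_partial i (fun y => y k) x (if k == i then 1 else 0).
Proof.
rewrite /has_partial /vadd /vscal /ebasis.
set c := (if k == i then 1 else 0).
have H := derivable_pt_lim_plus (fun _ => x k) (fun t => t * c) 0 0 (1 * c)
  (derivable_pt_lim_const _ _) (derivable_pt_lim_scal_right _ _ _ _ (derivable_pt_lim_id 0)).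
have E : 0 + 1 * c = c by ring.
rewrite E in H; exact H.
Qed.

Lemma hp_plus n i (f g : Rn n -> R) x l1 l2 :
  has_partial i f x l1 -> has_partial i g x l2 -> has_partial i (fun y => f y + g y) x (l1 + l2).
Proof. move=> H1 H2; exact: (derivable_pt_lim_plus _ _ _ _ _ H1 H2). Qed.

Lemma hp_mult n i (f g : Rn n -> R) x l1 l2 :
  has_partial i f x l1 -> has_partial i g x l2 ->
  has_partial i (fun y => f y * g y) x (l1 * g x + f x * l2).
Proof.
move=> H1 H2; have H := derivable_pt_lim_mult _ _ _ _ _ H1 H2.
rewrite /= vadd_scal0 in H; exact: H.
Qed.

Lemma hp_comp1 n i (f : Rn n -> R) (h : R -> R) x lh l :
  derivable_pt_lim h (f x) lh -> has_partial i f x l ->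
  has_partial i (fun y => h (f y)) x (lh * l).
Proof.
move=> Hh Hf. rewrite -(vadd_scal0 x (ebasis i)) in Hh.
exact: (derivable_pt_lim_comp _ _ _ _ _ Hf Hh).
Qed.

Lemma hp_sum n i (I : eqType) (r : seq I) (P : pred I) (F : I -> Rn n -> R) (L : I -> R) x :
  (forall k, has_partial i (F k) x (L k)) ->
  has_partial i (fun y => \big[Rplus/0]_(k <- r | P k) F k y) x (\big[Rplus/0]_(k <- r | P k) L k).
Proof.
move=> H; elim: r => [|a r IH].
  rewrite big_nil; apply: (hp_ext (f := fun _ => 0)); [by move=> y; rewrite big_nil | exact: hp_const].
case: (boolP (P a)) => Pa.
  rewrite big_cons Pa.
  apply: (hp_ext (f := fun y => F a y + \big[Rplus/0]_(k <- r | P k) F k y)).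
    by move=> y; rewrite big_cons Pa.
  exact: hp_plus.
rewrite big_cons (negbTE Pa).
apply: (hp_ext (f := fun y => \big[Rplus/0]_(k <- r | P k) F k y)) => //.
by move=> y; rewrite big_cons (negbTE Pa).
Qed.

Lemma hp_scal n i (c : R) (f : Rn n -> R) x l :
  has_partial i f x l -> has_partial i (fun y => c * f y) x (c * l).
Proof.
move=> H; apply: hp_eq; first exact: (hp_mult (hp_const i c x) H).
rewrite /= Rmult_0_l Rplus_0_l. done.
Qed.

Lemma pow2_ge_INR (m : nat) : INR m <= 2 ^ m.
Proof.
elim: m => [|m IH]; first by simpl; lra.
rewrite S_INR /=. have := pow_le 2 m ltac:(lra). have : 1 <= 2 ^ m by apply: pow_R1_Rle; lra.
lra.
Qed.

Lemma small_pow2 (C d : R) : 0 < d -> exists m : nat, C / 2 ^ m < d.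
Proof.
move=> Hd.
have He : 0 < d / (Rabs C + 1) by apply: Rdiv_lt_0_compat => //; have := Rabs_pos C; lra.
have [N [HN HN0]] := archimed_cor1 _ He.
exists N.
have HNp : 0 < INR N by exact: lt_0_INR.
have H2 := pow2_ge_INR N.
have Hp : 0 < 2 ^ N by apply: pow_lt; lra.
have HC := Rle_abs C. have HC0 := Rabs_pos C.
apply: Rle_lt_trans (_ : (Rabs C + 1) / INR N < d).
  rewrite /Rdiv; apply: Rle_trans (_ : (Rabs C + 1) * / 2 ^ N <= _).
    apply: Rmult_le_compat_r; [left; exact: Rinv_0_lt_compat | lra].
  apply: Rmult_le_compat_l; first lra.
  apply: Rinv_le_contravar => //.
have : (Rabs C + 1) * / INR N < (Rabs C + 1) * (d / (Rabs C + 1)).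
  apply: Rmult_lt_compat_l => //; lra.
have -> : (Rabs C + 1) * (d / (Rabs C + 1)) = d by field; lra.
by rewrite /Rdiv.
Qed.

Definition inbox {n} (b : Rn n * Rn n) (x : Rn n) := forall i, b.1 i <= x i <= b.2 i.
Definition hlo {n} (i : 'I_n) (b : Rn n * Rn n) : Rn n * Rn n :=
  (b.1, fun j => if j == i then (b.1 j + b.2 j) / 2 else b.2 j).
Definition hhi {n} (i : 'I_n) (b : Rn n * Rn n) : Rn n * Rn n :=
  (fun j => if j == i then (b.1 j + b.2 j) / 2 else b.1 j, b.2).
Definition good {n} (K : Rn n -> Prop) (f : Rn n -> R) (S : R) (b : Rn n * Rn n) :=
  forall eps, 0 < eps -> exists x, K x /\ inbox b x /\ S - eps < f x.
Definition chalf {n} K f S (i : 'I_n) b :=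
  if excluded_middle_informative (good K f S (hlo i b)) then hlo i b else hhi i b.

Definition okbox {n} (b : Rn n * Rn n) := forall j, b.1 j <= b.2 j.

Lemma good_chalf n K f S (i : 'I_n) b : good K f S b -> good K f S (chalf K f S i b).
Proof.
rewrite /chalf; case: excluded_middle_informative => [H _|Hn Hg]; first exact H.
change (good K f S (hhi i b)).
move=> eps He. apply: NNPP => Hno.
apply: Hn => e1 He1. apply: NNPP => Hno1.
have [x [Kx [Bx Fx]]] := Hg (Rmin eps e1) (Rmin_pos _ _ He He1).
have H1 := Rmin_l eps e1. have H2 := Rmin_r eps e1.
case: (Rle_lt_dec (x i) ((b.1 i + b.2 i) / 2)) => Hxi.
- apply: Hno1; exists x; split => //; split; last lra.
  move=> j; rewrite /hlo /=; case: eqP => [->|_]; have := Bx j; have := Bx i; lra.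
- apply: Hno; exists x; split => //; split; last lra.
  move=> j; rewrite /hhi /=; case: eqP => [->|_]; have := Bx j; have := Bx i; lra.
Qed.

Lemma chalf_props n K f S (i : 'I_n) b : okbox b ->
  forall j, b.1 j <= (chalf K f S i b).1 j /\ (chalf K f S i b).2 j <= b.2 j /\
    (chalf K f S i b).2 j - (chalf K f S i b).1 j = (b.2 j - b.1 j) / (if j == i then 2 else 1).
Proof.
move=> Hb j; have := Hb j; rewrite /chalf; case: excluded_middle_informative => HH /=;
  rewrite /hlo /hhi /=; case: eqP => _ Hj; split; try lra; split; lra.
Qed.

Definition rfold {n} K f S (s : seq 'I_n) (b : Rn n * Rn n) :=
  foldl (fun b i => chalf K f S i b) b s.

Lemma rfold_props n K f S (s : seq 'I_n) : forall b, okbox b -> good K f S b ->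
  good K f S (rfold K f S s b) /\
  forall j, b.1 j <= (rfold K f S s b).1 j /\ (rfold K f S s b).2 j <= b.2 j /\
    (rfold K f S s b).2 j - (rfold K f S s b).1 j = (b.2 j - b.1 j) / 2 ^ (count_mem j s).
Proof.
elim: s => [|a s IH] b Hb Hg.
  split => // j /=; split; first lra; split; first lra. field.
have -> : rfold K f S (a :: s) b = rfold K f S s (chalf K f S a b) by [].
have Hb1 : okbox (chalf K f S a b).
  move=> j; have [? [? E]] := chalf_props K f S a Hb j.
  have := Hb j. case: (j == a) E => E; [lra|lra].
have [Hg2 Hp2] := IH _ Hb1 (good_chalf a Hg).
split => // j.
have [A1 [A2 A3]] := chalf_props K f S a Hb j.
have [B1 [B2 B3]] := Hp2 j.
split; first lra. split; first lra.
rewrite B3 A3 /=.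
rewrite eq_sym; case: (a == j) => /=.
  rewrite add0n; field; apply: pow_nonzero; lra.
rewrite add0n; field; apply: pow_nonzero; lra.
Qed.

Definition rf {n} K f S (b : Rn n * Rn n) := rfold K f S (enum 'I_n) b.

Lemma rf_props n K f S (b : Rn n * Rn n) : okbox b -> good K f S b ->
  okbox (rf K f S b) /\ good K f S (rf K f S b) /\
  forall j, b.1 j <= (rf K f S b).1 j /\ (rf K f S b).2 j <= b.2 j /\
    (rf K f S b).2 j - (rf K f S b).1 j = (b.2 j - b.1 j) / 2.
Proof.
move=> Hb Hg; have [G P] := rfold_props (enum 'I_n) Hb Hg.
have E : forall j, (rf K f S b).2 j - (rf K f S b).1 j = (b.2 j - b.1 j) / 2.
  move=> j; have [_ [_ E]] := P j; rewrite /rf E count_uniq_mem ?enum_uniq // mem_enum /=.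
  by rewrite /Rdiv Rmult_1_r.
split; [|split => // j; have [? [? _]] := P j; split => //; split => //].
move=> j; have := E j; have := Hb j; lra.
Qed.

Lemma evt n (K : Rn n -> Prop) (f : Rn n -> R) (M : R) :
  (forall x, K x -> forall i, Rabs (x i) <= M) ->
  (forall x, closure K x -> K x) ->
  (exists x, K x) ->
  continuous_on K f ->
  (exists B, forall x, K x -> f x <= B) ->
  exists y, K y /\ forall x, K x -> f x <= f y.
Proof.
move=> HM Hcl [x0 Kx0] Hc [B HB].
pose E := fun r => exists x, K x /\ r = f x.
have [S [HS1 HS2]] : {S | is_lub E S}.
  apply: completeness; first by exists B => r [x [Kx ->]]; exact: HB.
  by exists (f x0), x0.
pose b0 : Rn n * Rn n := (fun _ => - M, fun _ => M).
have Hg0 : good K f S b0.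
  move=> eps He; apply: NNPP => Hno.
  have Hub : is_upper_bound E (S - eps).
    move=> r [x [Kx ->]]; apply: Rnot_lt_le => Hlt; apply: Hno; exists x.
    split => //; split; last lra.
    by move=> i /=; have := HM x Kx i; split_Rabs; lra.
  have := HS2 _ Hub; lra.
have Hok0 : okbox b0 by move=> j /=; have := HM x0 Kx0 j; have := Rabs_pos (x0 j); lra.
pose bs := fun m => iter m (rf K f S) b0.
have Hseq : forall m, okbox (bs m) /\ good K f S (bs m) /\
    forall j, (bs m).2 j - (bs m).1 j = 2 * M / 2 ^ m.
  elim => [|m [Hok [Hg Hw]]].
    split => //; split => // j /=; field.
  have [Hok' [Hg' Hp]] := rf_props Hok Hg.
  have -> : bs m.+1 = rf K f S (bs m) by rewrite /bs iterS.
  split => //; split => // j; have [_ [_ ->]] := Hp j; rewrite Hw /=; field; apply: pow_nonzero; lra.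
have Hstep : forall m j, (bs m).1 j <= (bs m.+1).1 j /\ (bs m.+1).2 j <= (bs m).2 j.
  move=> m j; have [Hok [Hg _]] := Hseq m; have [_ [_ Hp]] := rf_props Hok Hg.
  have -> : bs m.+1 = rf K f S (bs m) by rewrite /bs iterS.
  by have [? [? _]] := Hp j.
have Hlo : forall m k j, (m <= k)%nat -> (bs m).1 j <= (bs k).1 j.
  move=> m k j; elim: k => [|k IH]; first by rewrite leqn0 => /eqP ->; lra.
  rewrite leq_eqVlt => /orP [/eqP ->|Hk]; first lra.
  have := IH Hk; have := Hstep k j; lra.
have Hhi : forall m k j, (m <= k)%nat -> (bs k).2 j <= (bs m).2 j.
  move=> m k j; elim: k => [|k IH]; first by rewrite leqn0 => /eqP ->; lra.
  rewrite leq_eqVlt => /orP [/eqP ->|Hk]; first lra.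
  have := IH Hk; have := Hstep k j; lra.
have Hlohi : forall m k j, (bs m).1 j <= (bs k).2 j.
  move=> m k j; case: (leqP m k) => Hmk.
    have := Hlo _ _ j Hmk; have := (Hseq k).1 j; lra.
  have := Hhi _ _ j (ltnW Hmk); have := (Hseq m).1 j; lra.
have Hp : forall j, {pj | is_lub (fun r => exists m, r = (bs m).1 j) pj}.
  move=> j; apply: completeness.
    by exists ((bs 0%nat).2 j) => r [m ->]; exact: Hlohi.
  by exists ((bs 0%nat).1 j), 0%nat.
pose p := fun j => sval (Hp j).
have Hp1 : forall m j, (bs m).1 j <= p j.
  move=> m j; rewrite /p; case: (Hp j) => pj [H1 H2] /=; apply: H1; by exists m.
have Hp2 : forall m j, p j <= (bs m).2 j.
  move=> m j; rewrite /p; case: (Hp j) => pj [H1 H2] /=; apply: H2 => r [k ->]; exact: Hlohi.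
have Hdist : forall m x, inbox (bs m) x -> vdist x p <= INR n * (2 * M) / 2 ^ m.
  move=> m x Hx; apply: Rle_trans (vdist_le_l1 _ _) _.
  have -> : INR n * (2 * M) / 2 ^ m = \big[Rplus/0]_(i < n) (2 * M / 2 ^ m).
    rewrite sumR_const /Rdiv; ring.
  apply: sumR_le => j; have := Hx j; have := Hp1 m j; have := Hp2 m j; have := (Hseq m).2.2 j.
  move=> Hw A1 A2 A3; rewrite -Hw; split_Rabs; lra.
have Kp : K p.
  apply: Hcl => eps He.
  have [m Hm] := small_pow2 (INR n * (2 * M)) He.
  have [x [Kx [Bx _]]] := (Hseq m).2.1 1 ltac:(lra).
  exists x; split => //; have := Hdist m x Bx; lra.
exists p; split => // x Kx.
apply: Rle_trans (_ : S <= _); first by apply: HS1; exists x.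
apply: Rnot_lt_le => Hlt.
have He : 0 < (S - f p) / 2 by lra.
have [d [Hd Hd2]] := Hc p Kp _ He.
have [m Hm] := small_pow2 (INR n * (2 * M)) Hd.
have [y [Ky [By Fy]]] := (Hseq m).2.1 _ He.
have := Hd2 y Ky (Rle_lt_trans _ _ _ (Hdist m y By) Hm).
split_Rabs; lra.
Qed.

Lemma dlim_shift (G : R -> R) s0 l :
  derivable_pt_lim (fun t => G (s0 + t)) 0 l -> derivable_pt_lim G s0 l.
Proof.
move=> H eps He; have [d Hd] := H eps He; exists d => h Hh0 Hh.
have := Hd h Hh0 Hh; rewrite Rplus_0_r Rplus_0_l //.
Qed.

Lemma vadd_assoc_e n (p e : Rn n) s t : vadd (vadd p (vscal s e)) (vscal t e) = vadd p (vscal (s + t) e).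
Proof. apply: functional_extensionality => j; rewrite /vadd /vscal; ring. Qed.

Lemma line_deriv n (rho : Rn n -> R) (D : 'I_n -> Rn n -> R) (k : 'I_n) (p : Rn n) s0 :
  has_partial k rho (vadd p (vscal s0 (ebasis k))) (D k (vadd p (vscal s0 (ebasis k)))) ->
  derivable_pt_lim (fun s => rho (vadd p (vscal s (ebasis k)))) s0 (D k (vadd p (vscal s0 (ebasis k)))).
Proof.
move=> H; apply: dlim_shift; rewrite /has_partial in H.
have E : (fun t => rho (vadd p (vscal (s0 + t) (ebasis k)))) =
         (fun t => rho (vadd (vadd p (vscal s0 (ebasis k))) (vscal t (ebasis k)))).
  by apply: functional_extensionality => t; rewrite vadd_assoc_e.
by rewrite E.
Qed.

Lemma coord_mvt n (rho : Rn n -> R) (D : 'I_n -> Rn n -> R) (k : 'I_n) (p : Rn n) h :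
  (forall s, Rmin 0 h <= s <= Rmax 0 h ->
     has_partial k rho (vadd p (vscal s (ebasis k))) (D k (vadd p (vscal s (ebasis k))))) ->
  exists c, Rmin 0 h <= c <= Rmax 0 h /\
    rho (vadd p (vscal h (ebasis k))) - rho p = h * D k (vadd p (vscal c (ebasis k))).
Proof.
move=> H.
pose g := fun s => rho (vadd p (vscal s (ebasis k))).
pose g' := fun s => D k (vadd p (vscal s (ebasis k))).
have Hg : forall s, Rmin 0 h <= s <= Rmax 0 h -> derivable_pt_lim g s (g' s).
  move=> s Hs; exact: line_deriv (H s Hs).
have Hp : rho p = g 0 by rewrite /g vadd_scal0.
case: (Rtotal_order 0 h) => [Hh|[Hh|Hh]].
- have [c [Ec Hc]] := MVT_cor2 g g' _ _ Hh (fun c Hc => Hg c ltac:(rewrite Rmin_left ?Rmax_right; lra)).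
  exists c; rewrite Rmin_left ?Rmax_right; try lra. split; first lra.
  rewrite Hp; rewrite /g /g' in Ec *; rewrite Ec; ring.
- subst h; exists 0; rewrite Rmin_left ?Rmax_left; try lra; split; first lra.
  rewrite vadd_scal0; ring.
- have [c [Ec Hc]] := MVT_cor2 g g' _ _ Hh (fun c Hc => Hg c ltac:(rewrite Rmin_right ?Rmax_left; lra)).
  exists c; rewrite Rmin_right ?Rmax_left; try lra. split; first lra.
  rewrite Hp; rewrite /g /g' in Ec *; have -> : g h - g 0 = - (g 0 - g h) by ring.
  rewrite /g Ec; ring.
Qed.

Lemma vdist_coord_bound n (z y v : Rn n) t : 0 <= t ->
  (forall j, Rabs (z j - y j) <= t * Rabs (v j)) ->
  vdist z y <= t * \big[Rplus/0]_(j < n) Rabs (v j).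
Proof.
move=> Ht H; apply: Rle_trans (vdist_le_l1 _ _) _.
rewrite -sumR_scal; exact: sumR_le.
Qed.

Definition Ppath {n} (y v : Rn n) (k : nat) (t : R) : Rn n :=
  fun j => y j + (if (j < k)%N then t * v j else 0).

Lemma Ppath_step n (y v : Rn n) (kk : 'I_n) t :
  Ppath y v kk.+1 t = vadd (Ppath y v kk t) (vscal (t * v kk) (ebasis kk)).
Proof.
apply: functional_extensionality => j; rewrite /Ppath /vadd /vscal /ebasis ltnS leq_eqVlt.
case: (eqVneq j kk) => [->|Hne]; first by rewrite eqxx /= ltnn; ring.
have Hv : (nat_of_ord j == nat_of_ord kk) = false by apply/negbTE; move: Hne; apply: contra => /eqP E; apply/eqP; apply: val_inj.
rewrite Hv /=; ring.
Qed.

Lemma sum_ltS n (g : 'I_n -> R) (kk : 'I_n) :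
  \big[Rplus/0]_(i < n) (if (i < kk.+1)%N then g i else 0) =
  \big[Rplus/0]_(i < n) (if (i < kk)%N then g i else 0) + g kk.
Proof.
rewrite -[g kk](sumR_ind g kk) -sumR_split; apply: eq_bigr => i _.
rewrite ltnS leq_eqVlt.
case: (eqVneq i kk) => [->|Hne]; first by rewrite eqxx /= ltnn; ring.
have Hv : (nat_of_ord i == nat_of_ord kk) = false by apply/negbTE; move: Hne; apply: contra => /eqP E; apply/eqP; apply: val_inj.
by rewrite Hv /=; case: (i < kk)%N; ring.
Qed.

Lemma dir_claim n (rho : Rn n -> R) (D : 'I_n -> Rn n -> R) (y : Rn n) (r : R) (v : Rn n) :
  0 < r ->
  (forall i x, ball y r x -> has_partial i rho x (D i x)) ->
  (forall i, continuous_on (ball y r) (D i)) ->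
  forall k, (k <= n)%N -> forall eps, 0 < eps -> exists tau, 0 < tau /\ forall t, 0 < t < tau ->
    Rabs (rho (Ppath y v k t) - rho y - t * \big[Rplus/0]_(i < n) (if (i < k)%N then D i y * v i else 0))
      <= eps * t.
Proof.
move=> Hr HD HDc.
pose V := \big[Rplus/0]_(j < n) Rabs (v j).
have HV : 0 <= V by apply: sumR_ge0 => j; exact: Rabs_pos.
elim => [|k IH] Hk eps He.
  exists 1; split; first lra. move=> t Ht.
  have -> : Ppath y v 0 t = y.
    by apply: functional_extensionality => j; rewrite /Ppath /=; ring.
  have -> : \big[Rplus/0]_(i < n) (if (i < 0)%N then D i y * v i else 0) = 0 by apply: big1.
  rewrite Rmult_0_r Rminus_diag Rminus_0_r Rabs_R0; nra.
have Hkn : (k < n)%N by [].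
pose kk : 'I_n := Ordinal Hkn.
have [t1 [Ht1 H1]] := IH (ltnW Hkn) (eps / 2) ltac:(lra).
pose A := Rabs (v kk).
have HA : 0 <= A by exact: Rabs_pos.
have Hyb : ball y r y by rewrite /ball vdist_xx.
have He2 : 0 < eps / (2 * (A + 1)) by apply: Rdiv_lt_0_compat; lra.
have [d [Hd Hdc]] := HDc kk y Hyb _ He2.
exists (Rmin t1 (Rmin (d / (V + 1)) (r / (V + 1)))).
split. apply: Rmin_pos => //; apply: Rmin_pos; apply: Rdiv_lt_0_compat; lra.
move=> t [Ht0 Ht].
have Htt1 : t < t1 by apply: Rlt_le_trans Ht (Rmin_l _ _).
have Htd : t * (V + 1) < d.
  have : t < d / (V + 1) by apply: Rlt_le_trans Ht _; apply: Rle_trans (Rmin_r _ _) (Rmin_l _ _).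
  move=> H; have := Rmult_lt_compat_r (V + 1) _ _ ltac:(lra) H; rewrite /Rdiv Rmult_assoc Rinv_l; lra.
have Htr : t * (V + 1) < r.
  have : t < r / (V + 1) by apply: Rlt_le_trans Ht _; apply: Rle_trans (Rmin_r _ _) (Rmin_r _ _).
  move=> H; have := Rmult_lt_compat_r (V + 1) _ _ ltac:(lra) H; rewrite /Rdiv Rmult_assoc Rinv_l; lra.
pose h := t * v kk.
have Hz : forall s, Rmin 0 h <= s <= Rmax 0 h ->
    vdist (vadd (Ppath y v k t) (vscal s (ebasis kk))) y <= t * V.
  move=> s Hs; apply: vdist_coord_bound; first lra.
  move=> j; rewrite /vadd /vscal /ebasis /Ppath.
  have Hsh : Rabs s <= t * Rabs (v kk).
    rewrite -(Rabs_right t); last lra. rewrite -Rabs_mult -/h.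
    case: (Rle_lt_dec 0 h) => H0.
      rewrite Rmin_left ?Rmax_right in Hs; try lra. split_Rabs; lra.
    rewrite Rmin_right ?Rmax_left in Hs; try lra. split_Rabs; lra.
  case: (eqVneq j kk) => [->|Hne].
    rewrite ltnn; have -> : y kk + 0 + s * 1 - y kk = s by ring. done.
  have -> : y j + (if (j < k)%N then t * v j else 0) + s * 0 - y j = if (j < k)%N then t * v j else 0.
    by case: (j < k)%N; ring.
  case: (j < k)%N; last by rewrite Rabs_R0; have := Rabs_pos (v j); nra.
  rewrite Rabs_mult Rabs_right; lra.
have Hball : forall s, Rmin 0 h <= s <= Rmax 0 h -> ball y r (vadd (Ppath y v k t) (vscal s (ebasis kk))).
  move=> s Hs; rewrite /ball; have := Hz s Hs; have := HV; nra.
have [c [Hc Ec]] := coord_mvt (D := D) (rho := rho) (p := Ppath y v k t) (h := h) (k := kk)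
  (fun s Hs => HD kk _ (Hball s Hs)).
have Hzc := Hz c Hc.
have Hdc' := Hdc _ (Hball c Hc) ltac:(have := HV; nra).
have -> : Ppath y v k.+1 t = Ppath y v kk.+1 t by [].
have HS := sum_ltS (fun i => D i y * v i) kk.
change (nat_of_ord kk) with k in HS. rewrite HS Ppath_step -/h.
set Z := rho (vadd (Ppath y v kk t) (vscal h (ebasis kk))).
have EZ : Z = rho (Ppath y v k t) + h * D kk (vadd (Ppath y v k t) (vscal c (ebasis kk))).
  rewrite /Z; change (nat_of_ord kk) with k; lra.
have Hih := H1 t ltac:(lra).
set S0 := \big[Rplus/0]_(i < n) (if (i < k)%N then D i y * v i else 0) in Hih.
have -> : \big[Rplus/0]_(i < n) (if (i < kk)%N then D i y * v i else 0) = S0 by [].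
rewrite EZ.
set Dc := D kk (vadd (Ppath y v k t) (vscal c (ebasis kk))) in Hdc' *.
have -> : rho (Ppath y v k t) + h * Dc - rho y - t * (S0 + D kk y * v kk) =
  (rho (Ppath y v k t) - rho y - t * S0) + t * v kk * (Dc - D kk y) by rewrite /h; ring.
apply: Rle_trans (Rabs_triang _ _) _.
rewrite Rabs_mult Rabs_mult (Rabs_right t); last lra.
have HAe : A * (eps / (2 * (A + 1))) <= eps / 2.
  apply: (Rmult_le_reg_r (2 * (A + 1))); first lra.
  have -> : A * (eps / (2 * (A + 1))) * (2 * (A + 1)) = A * eps by field; lra.
  have -> : eps / 2 * (2 * (A + 1)) = (A + 1) * eps by field.
  nra.
rewrite -/A.
have : t * A * Rabs (Dc - D kk y) <= t * (A * (eps / (2 * (A + 1)))).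
  rewrite Rmult_assoc; apply: Rmult_le_compat_l; first lra.
  apply: Rmult_le_compat_l => //; lra.
nra.
Qed.

Lemma dir_deriv_le n (rho : Rn n -> R) (D : 'I_n -> Rn n -> R) (y : Rn n) (r : R) (v : Rn n) :
  0 < r ->
  (forall i x, ball y r x -> has_partial i rho x (D i x)) ->
  (forall i, continuous_on (ball y r) (D i)) ->
  (exists T, 0 < T /\ forall t, 0 < t < T -> rho (vadd y (vscal t v)) <= rho y) ->
  \big[Rplus/0]_(i < n) (D i y * v i) <= 0.
Proof.
move=> Hr HD HDc [T [HT HTr]].
apply: Rnot_lt_le => HL.
have [tau [Htau H]] := dir_claim v Hr HD HDc (leqnn n) (eps := \big[Rplus/0]_(i < n) (D i y * v i) / 2) ltac:(lra).
pose t := Rmin tau T / 2.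
have Ht0 : 0 < t by rewrite /t; have := Rmin_pos _ _ Htau HT; lra.
have Htt : t < tau by rewrite /t; have := Rmin_l tau T; lra.
have HtT : t < T by rewrite /t; have := Rmin_r tau T; have := Rmin_pos _ _ Htau HT; lra.
have := H t (conj Ht0 Htt).
have -> : Ppath y v n t = vadd y (vscal t v).
  by apply: functional_extensionality => j; rewrite /Ppath /vadd /vscal ltn_ord.
have -> : \big[Rplus/0]_(i < n) (if (i < n)%N then D i y * v i else 0) = \big[Rplus/0]_(i < n) (D i y * v i).
  by apply: eq_bigr => i _; rewrite ltn_ord.
have := HTr t (conj Ht0 HtT).
set L := \big[Rplus/0]_(i < n) (D i y * v i).
move=> H1 H2.
have := Rle_abs (- (rho (vadd y (vscal t v)) - rho y - t * L)). rewrite Rabs_Ropp.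
have : 0 < t * L by apply: Rmult_lt_0_compat.
move=> HtL H3. have E : L / 2 * t = (t * L) / 2 by field. rewrite E in H2. lra.
Qed.

Lemma vdist_scal_l1 n (a b : Rn n) (c : R) (z z' : Rn n) :
  (forall i, z' i - z i = c * (a i - b i)) -> vdist z' z <= Rabs c * (INR n * vdist a b).
Proof.
move=> H; apply: Rle_trans (vdist_le_l1 _ _) _.
apply: Rle_trans (_ : \big[Rplus/0]_(i < n) (Rabs c * Rabs (a i - b i)) <= _).
  by apply: sumR_le => i; rewrite H Rabs_mult; lra.
rewrite sumR_scal; apply: Rmult_le_compat_l; first exact: Rabs_pos.
exact: l1_le_vdist.
Qed.

Lemma conv_seg n (Om : Rn n -> Prop) (y z : Rn n) (rho0 t : R) :
  is_convex Om -> closure Om y -> 0 < rho0 -> (forall w, vdist w z < rho0 -> Om w) ->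
  0 < t <= 1 -> Om (vadd y (vscal t (vsub z y))).
Proof.
move=> Hcv Hcl Hr Hz Ht.
have Hn : 0 <= INR n by exact: pos_INR.
have Heta : 0 < rho0 * t / (INR n + 1) by apply: Rdiv_lt_0_compat; nra.
have [y' [Oy' Hy']] := Hcl _ Heta.
pose z' : Rn n := fun i => z i + (1 - t) / t * (y i - y' i).
have Oz' : Om z'.
  apply: Hz; apply: Rle_lt_trans (vdist_scal_l1 (a := y) (b := y') (c := (1 - t) / t) _) _.
    by move=> i; rewrite /z'; ring.
  rewrite Rabs_right; last by apply: Rle_ge; apply: Rmult_le_pos; [lra | left; apply: Rinv_0_lt_compat; lra].
  rewrite vdist_sym.
  have H1 : INR n * vdist y' y <= INR n * (rho0 * t / (INR n + 1)) by apply: Rmult_le_compat_l => //; lra.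
  have H2 : INR n * (rho0 * t / (INR n + 1)) < rho0 * t.
    apply: (Rmult_lt_reg_r (INR n + 1)); first lra.
    have -> : INR n * (rho0 * t / (INR n + 1)) * (INR n + 1) = INR n * (rho0 * t) by field; lra.
    nra.
  have H3 : 0 <= (1 - t) / t by apply: Rmult_le_pos; [lra | left; apply: Rinv_0_lt_compat; lra].
  apply: Rle_lt_trans (_ : (1 - t) / t * (rho0 * t) < _).
    apply: Rmult_le_compat_l => //; lra.
  have -> : (1 - t) / t * (rho0 * t) = (1 - t) * rho0 by field; lra.
  nra.
have := Hcv y' z' t Oy' Oz' ltac:(lra).
have -> : vadd y' (vscal t (vsub z' y')) = vadd y (vscal t (vsub z y)) => //.
apply: functional_extensionality => i; rewrite /vadd /vscal /vsub /z'; field; lra.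
Qed.

Lemma smooth_partials_cont n (U : Rn n -> Prop) rho (D : 'I_n -> Rn n -> R) :
  smooth_on U rho -> (forall i x, U x -> has_partial i rho x (D i x)) ->
  forall i, continuous_on U (D i).
Proof.
move=> Hs HD i.
have [_ [g [Hg Hgc]]] := Hs 1%nat.
have E : forall x, U x -> D i x = g i x.
  move=> x Ux; exact: uniqueness_limite (HD i x Ux) (Hg i x Ux).
have [Hc _] := Hgc i.
move=> x Ux eps He; have [d [Hd H]] := Hc x Ux eps He; exists d; split => // y Uy Hy.
rewrite !E //; exact: H.
Qed.

Lemma normal_sign n (Om : Rn n -> Prop) (x0 y : Rn n) r rho Drho :
  is_open Om -> is_convex Om -> Om x0 -> ~ Om y -> closure Om y ->
  local_defining Om y r rho Drho ->
  0 < \big[Rplus/0]_(i < n) (Drho i y * (y i - x0 i)).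
Proof.
move=> Hop Hcv Ox0 Ny Cy [Hr [Hsm [HD [Hiff [i0 Hi0]]]]].
have HDc := smooth_partials_cont Hsm HD.
have [rho0 [Hr0 Hb0]] := Hop x0 Ox0.
have Hyb : ball y r y by rewrite /ball vdist_xx.
have Hry : 0 <= rho y by apply: Rnot_lt_le => H; apply: Ny; apply/(Hiff y Hyb).
pose g : Rn n := fun i => Drho i y.
pose G := \big[Rplus/0]_(i < n) Rabs (g i).
have HG : 0 <= G by apply: sumR_ge0 => i; exact: Rabs_pos.
pose N2 := \big[Rplus/0]_(i < n) (g i * g i).
have HN2 : 0 < N2.
  apply: Rlt_le_trans (_ : g i0 * g i0 <= N2).
    have : g i0 <> 0 by []. move=> H; nra.
  by rewrite /N2; apply: (@sumR_term_le n (fun k => g k * g k) i0) => k; nra.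
have Hn : 0 <= INR n by exact: pos_INR.
pose sig := rho0 / (2 * (INR n + 1)).
have Hsig : 0 < sig by apply: Rdiv_lt_0_compat; lra.
pose th := sig / (INR n * G + 1) / 2.
have Hth : 0 < th by rewrite /th; apply: Rdiv_lt_0_compat; [apply: Rdiv_lt_0_compat|]; nra.
pose z : Rn n := fun i => x0 i + th * g i.
have Hzx : INR n * vdist z x0 < sig.
  have H1 : vdist z x0 <= th * G.
    apply: vdist_coord_bound; first lra. move=> i; rewrite /z.
    have -> : x0 i + th * g i - x0 i = th * g i by ring.
    by rewrite Rabs_mult Rabs_right; lra.
  have H2 : INR n * (th * G) < sig.
    have -> : INR n * (th * G) = sig * (INR n * G / (INR n * G + 1)) / 2 by rewrite /th; field; nra.
    have : INR n * G / (INR n * G + 1) <= 1.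
      apply: (Rmult_le_reg_r (INR n * G + 1)); first nra.
      have -> : INR n * G / (INR n * G + 1) * (INR n * G + 1) = INR n * G by field; nra.
      nra.
    have : 0 <= INR n * G / (INR n * G + 1) by apply: Rmult_le_pos; [nra | left; apply: Rinv_0_lt_compat; nra].
    nra.
  have := Rmult_le_compat_l _ _ _ Hn H1; lra.
have Hzball : forall w, vdist w z < sig -> Om w.
  move=> w Hw; apply: Hb0.
  apply: Rle_lt_trans (vdist_wtri w z x0) _.
  have : INR n * vdist w z <= INR n * sig by apply: Rmult_le_compat_l => //; lra.
  have : INR n * sig < rho0 / 2.
    rewrite /sig; apply: (Rmult_lt_reg_r (2 * (INR n + 1))); first lra.
    have -> : INR n * (rho0 / (2 * (INR n + 1))) * (2 * (INR n + 1)) = INR n * rho0 by field; lra.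
    nra.
  have : sig <= rho0 / 2.
    rewrite /sig; apply: (Rmult_le_reg_r (2 * (INR n + 1))); first lra.
    have -> : rho0 / (2 * (INR n + 1)) * (2 * (INR n + 1)) = rho0 by field; lra.
    nra.
  lra.
pose v : Rn n := vsub z y.
pose V := \big[Rplus/0]_(i < n) Rabs (v i).
have HV : 0 <= V by apply: sumR_ge0 => i; exact: Rabs_pos.
have Hdir := dir_deriv_le (v := v) Hr HD HDc.
have Hle : \big[Rplus/0]_(i < n) (Drho i y * v i) <= 0.
  apply: Hdir; exists (Rmin 1 (r / (V + 1))); split.
    apply: Rmin_pos; first lra; apply: Rdiv_lt_0_compat; lra.
  move=> t [Ht0 Ht].
  have Ht1 : t <= 1 by have := Rmin_l 1 (r / (V + 1)); lra.
  have Htr : t * (V + 1) < r.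
    have : t < r / (V + 1) by apply: Rlt_le_trans Ht (Rmin_r _ _).
    move=> H; have := Rmult_lt_compat_r (V + 1) _ _ ltac:(lra) H; rewrite /Rdiv Rmult_assoc Rinv_l; lra.
  have Hpb : ball y r (vadd y (vscal t v)).
    rewrite /ball; apply: Rle_lt_trans (_ : vdist _ y <= t * V) _; last nra.
    apply: vdist_coord_bound; first lra.
    move=> i; rewrite /vadd /vscal.
    have -> : y i + t * v i - y i = t * v i by ring.
    by rewrite Rabs_mult Rabs_right; lra.
  have Op : Om (vadd y (vscal t v)) by apply: (conv_seg Hcv Cy Hsig Hzball); lra.
  have := proj1 (Hiff _ Hpb) Op; lra.
have E : \big[Rplus/0]_(i < n) (Drho i y * v i) =
  th * N2 - \big[Rplus/0]_(i < n) (Drho i y * (y i - x0 i)).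
  rewrite /N2 -sumR_scal /Rminus -sumR_opp -sumR_split; apply: eq_bigr => i _.
  rewrite /v /vsub /z /g; ring.
rewrite E in Hle. nra.
Qed.

Definition Sq {n} (a x : Rn n) : R := \big[Rplus/0]_(k < n) ((x k - a k) * (x k - a k)).

Lemma Sq_ge0 n (a x : Rn n) : 0 <= Sq a x.
Proof. rewrite /Sq; apply: sumR_ge0 => k; exact: Rle_0_sqr. Qed.

Lemma Sq_vdist n (a x : Rn n) : Sq a x = vdist x a * vdist x a.
Proof.
rewrite /vdist /vnorm sqrt_sqrt; last exact: vdot_ge0.
by [].
Qed.

Lemma hp_lin n j (a : Rn n) (k : 'I_n) x :
  has_partial j (fun x : Rn n => x k - a k) x (if k == j then 1 else 0).
Proof.
apply: hp_eq; first exact: (hp_plus (hp_coord j k x) (hp_const j (- a k) x)).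
ring.
Qed.

Lemma hp_Sq n j (a x : Rn n) : has_partial j (Sq a) x (2 * (x j - a j)).
Proof.
apply: hp_eq.
  apply: (@hp_sum n j _ (index_enum 'I_n) (fun _ => true) (fun k x => (x k - a k) * (x k - a k))
     (fun k => (if k == j then 1 else 0) * (x k - a k) + (x k - a k) * (if k == j then 1 else 0))) => k.
  exact: (hp_mult (hp_lin j a k x) (hp_lin j a k x)).
rewrite -(sumR_ind (fun k => 2 * (x k - a k)) j).
apply: eq_bigr => k _. set d := (if k == j then 1 else 0). ring.
Qed.

Lemma gcont_lin n (a : Rn n) (k : 'I_n) : gcont (fun x : Rn n => x k - a k).
Proof. exact: (gcont_plus (gcont_coord k) (@gcont_const n (- a k))). Qed.

Lemma gcont_Sq n (a : Rn n) : gcont (Sq a).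
Proof.
apply: (@gcont_sum n _ (index_enum 'I_n) (fun _ => true) (fun k x => (x k - a k) * (x k - a k))) => k.
exact: gcont_mult (gcont_lin a k) (gcont_lin a k).
Qed.

Lemma d_sqrt_shift (A e z : R) : 0 < z + e ->
  derivable_pt_lim (fun z => A * sqrt (z + e)) z (A * / (2 * sqrt (z + e))).
Proof.
move=> H.
have H1 : derivable_pt_lim (fun z => z + e) z 1.
  have := derivable_pt_lim_plus id (fun _ => e) z 1 0 (derivable_pt_lim_id z) (derivable_pt_lim_const e z).
  by rewrite Rplus_0_r.
have H2 := derivable_pt_lim_comp _ _ _ _ _ H1 (derivable_pt_lim_sqrt _ H).
have H3 := derivable_pt_lim_scal _ A _ _ H2.
rewrite Rmult_1_r in H3; exact: H3.
Qed.

Lemma dlim_eq f z l l' : derivable_pt_lim f z l -> l = l' -> derivable_pt_lim f z l'.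
Proof. by move=> H <-. Qed.

Lemma d_sqrt_shift1 (e z : R) : 0 < z + e ->
  derivable_pt_lim (fun z => sqrt (z + e)) z (/ (2 * sqrt (z + e))).
Proof.
move=> H.
have H1 : derivable_pt_lim (fun z => z + e) z 1.
  have := derivable_pt_lim_plus id (fun _ => e) z 1 0 (derivable_pt_lim_id z) (derivable_pt_lim_const e z).
  by rewrite Rplus_0_r.
have H2 := derivable_pt_lim_comp _ _ _ _ _ H1 (derivable_pt_lim_sqrt _ H).
rewrite Rmult_1_r in H2; exact: H2.
Qed.

Lemma d_invsqrt_shift (A e z : R) : 0 < z + e ->
  derivable_pt_lim (fun z => A / sqrt (z + e)) z (- A / (2 * ((z + e) * sqrt (z + e)))).
Proof.
move=> H.
have Hs : 0 < sqrt (z + e) by apply: sqrt_lt_R0.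
have H2 := derivable_pt_lim_div (fun _ => A) (fun z => sqrt (z + e)) z 0 _
   (derivable_pt_lim_const A z) (d_sqrt_shift1 H) ltac:(simpl; lra).
apply: (dlim_eq H2).
have Hss : sqrt (z + e) * sqrt (z + e) = z + e by apply: sqrt_sqrt; lra.
rewrite /Rsqr. set s := sqrt (z + e) in Hss Hs *. rewrite -Hss. field; lra.
Qed.

Definition Phi {n} (A e ep C : R) (x0 y x : Rn n) : R :=
  ((A * sqrt (Sq x0 x + e) + (- ep) * Sq x0 x) + C) + Sq y x * Sq y x.
Definition DPhi {n} (A e ep : R) (x0 y : Rn n) (i : 'I_n) (x : Rn n) : R :=
  (A / sqrt (Sq x0 x + e) + (- 2 * ep)) * (x i - x0 i) + 4 * Sq y x * (x i - y i).
Definition D2Phi {n} (A e ep : R) (x0 y : Rn n) (i j : 'I_n) (x : Rn n) : R :=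
  - A / ((Sq x0 x + e) * sqrt (Sq x0 x + e)) * (x j - x0 j) * (x i - x0 i)
  + (A / sqrt (Sq x0 x + e) + (- 2 * ep)) * (if i == j then 1 else 0)
  + 8 * (x j - y j) * (x i - y i) + 4 * Sq y x * (if i == j then 1 else 0).

Lemma hp_Phi n (A e ep C : R) (x0 y : Rn n) j x : 0 < e ->
  has_partial j (Phi A e ep C x0 y) x (DPhi A e ep x0 y j x).
Proof.
move=> He.
have Hz : 0 < Sq x0 x + e by have := Sq_ge0 x0 x; lra.
have Hs : 0 < sqrt (Sq x0 x + e) by apply: sqrt_lt_R0.
have H1 := hp_comp1 (h := fun z => A * sqrt (z + e)) (d_sqrt_shift A Hz) (hp_Sq j x0 x).
have H2 := hp_scal (- ep) (hp_Sq j x0 x).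
have H3 := hp_mult (hp_Sq j y x) (hp_Sq j y x).
apply: hp_eq; first exact: (hp_plus (hp_plus (hp_plus H1 H2) (hp_const j C x)) H3).
rewrite /DPhi; field; lra.
Qed.

Lemma hp_DPhi n (A e ep : R) (x0 y : Rn n) i j x : 0 < e ->
  has_partial j (DPhi A e ep x0 y i) x (D2Phi A e ep x0 y i j x).
Proof.
move=> He.
have Hz : 0 < Sq x0 x + e by have := Sq_ge0 x0 x; lra.
have Hs : 0 < sqrt (Sq x0 x + e) by apply: sqrt_lt_R0.
have K1 := hp_comp1 (h := fun z => A / sqrt (z + e)) (d_invsqrt_shift A Hz) (hp_Sq j x0 x).
have K2 := hp_plus K1 (hp_const j (- 2 * ep) x).
have K3 := hp_mult K2 (hp_lin j x0 i x).
have K4 := hp_mult (hp_scal 4 (hp_Sq j y x)) (hp_lin j y i x).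
apply: hp_eq; first exact: (hp_plus K3 K4).
rewrite /D2Phi. set d := (if i == j then 1 else 0). field; lra.
Qed.

Lemma cont_sqrt_shift (e z : R) : 0 < z + e -> continuity_pt (fun z => sqrt (z + e)) z.
Proof. move=> H; exact: dlim_cont (d_sqrt_shift1 H). Qed.

Lemma gcont_Phi n (A e ep C : R) (x0 y : Rn n) : 0 < e -> gcont (Phi A e ep C x0 y).
Proof.
move=> He.
have G1 : gcont (fun x => A * sqrt (Sq x0 x + e)).
  apply: gcont_scal; apply: (gcont_comp1 (h := fun z => sqrt (z + e))); last exact: gcont_Sq.
  move=> x; apply: cont_sqrt_shift; have := Sq_ge0 x0 x; lra.
apply: gcont_plus; last exact: gcont_mult (gcont_Sq y) (gcont_Sq y).
apply: gcont_plus; last exact: gcont_const.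
apply: gcont_plus => //; exact: gcont_scal (gcont_Sq x0).
Qed.

Lemma gcont_invsqrt n (A e : R) (x0 : Rn n) : 0 < e -> gcont (fun x => A / sqrt (Sq x0 x + e)).
Proof.
move=> He; apply: (gcont_comp1 (h := fun z => A / sqrt (z + e))); last exact: gcont_Sq.
move=> x; apply: dlim_cont; apply: d_invsqrt_shift; have := Sq_ge0 x0 x; lra.
Qed.

Lemma gcont_DPhi n (A e ep : R) (x0 y : Rn n) i : 0 < e -> gcont (DPhi A e ep x0 y i).
Proof.
move=> He.
apply: gcont_plus.
  apply: gcont_mult; last exact: gcont_lin.
  apply: gcont_plus; [exact: gcont_invsqrt | exact: gcont_const].
apply: gcont_mult; last exact: gcont_lin.
apply: gcont_scal; exact: gcont_Sq.
Qed.

Lemma gcont_D2Phi n (A e ep : R) (x0 y : Rn n) i j : 0 < e -> gcont (D2Phi A e ep x0 y i j).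
Proof.
move=> He.
have G0 : gcont (fun x => - A / ((Sq x0 x + e) * sqrt (Sq x0 x + e))).
  apply: (gcont_comp1 (h := fun z => - A / ((z + e) * sqrt (z + e)))); last exact: gcont_Sq.
  move=> x.
  have Hz : 0 < Sq x0 x + e by have := Sq_ge0 x0 x; lra.
  have Hs : 0 < sqrt (Sq x0 x + e) by apply: sqrt_lt_R0.
  apply: (continuity_pt_div (fun _ => - A) (fun z => (z + e) * sqrt (z + e))).
  - by apply: continuity_pt_const.
  - apply: (continuity_pt_mult (fun z => z + e) (fun z => sqrt (z + e))); last exact: cont_sqrt_shift.
    apply: dlim_cont; apply: (derivable_pt_lim_plus id (fun _ => e) _ 1 0 (derivable_pt_lim_id _) (derivable_pt_lim_const e _)).
  - simpl; nra.
apply: gcont_plus; last by apply: gcont_mult; [exact: gcont_scal (gcont_Sq y) | exact: gcont_const].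
apply: gcont_plus.
  apply: gcont_plus.
    apply: gcont_mult; last exact: gcont_lin.
    apply: gcont_mult => //; exact: gcont_lin.
  apply: gcont_mult; last exact: gcont_const.
  apply: gcont_plus; [exact: gcont_invsqrt | exact: gcont_const].
apply: gcont_mult; last exact: gcont_lin.
apply: gcont_scal; exact: gcont_lin.
Qed.

Lemma C2_Phi n (U : Rn n -> Prop) (A e ep C : R) (x0 y : Rn n) : 0 < e ->
  C2_data U (Phi A e ep C x0 y) (DPhi A e ep x0 y) (D2Phi A e ep x0 y).
Proof.
move=> He; split; first by apply: gcont_on; exact: gcont_Phi.
split; first by move=> i x _; exact: hp_Phi.
split; first by move=> i; apply: gcont_on; exact: gcont_DPhi.
split; first by move=> i j x _; exact: hp_DPhi.
by move=> i j; apply: gcont_on; exact: gcont_D2Phi.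
Qed.

Lemma Sq_xx n (y : Rn n) : Sq y y = 0.
Proof. rewrite /Sq big1 // => k _; ring. Qed.

Lemma DPhi_at n (A e ep : R) (x0 y : Rn n) i :
  DPhi A e ep x0 y i y = (A / sqrt (Sq x0 y + e) + (- 2 * ep)) * (y i - x0 i).
Proof. rewrite /DPhi Sq_xx; ring. Qed.

Lemma D2Phi_at n (A e ep : R) (x0 y : Rn n) i j :
  D2Phi A e ep x0 y i j y = - A / ((Sq x0 y + e) * sqrt (Sq x0 y + e)) * (y j - x0 j) * (y i - x0 i)
    + (A / sqrt (Sq x0 y + e) + (- 2 * ep)) * (if i == j then 1 else 0).
Proof. rewrite /D2Phi Sq_xx; set d := (if i == j then 1 else 0); ring. Qed.

Lemma quad_comp n (a c : R) (w : Rn n) :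
  quadform (fun i j => a * w j * w i + c * (if i == j then 1 else 0)) (fun i => c * w i) =
  c * c * vdot w w * (a * vdot w w + c).
Proof.
rewrite /quadform.
set s := vdot w w.
have E : forall i : 'I_n, \big[Rplus/0]_(j < n) ((a * w j * w i + c * (if i == j then 1 else 0)) * (c * w i) * (c * w j))
   = (a * c * c * s) * (w i * w i) + c * c * c * (w i * w i).
  move=> i.
  have -> : \big[Rplus/0]_(j < n) ((a * w j * w i + c * (if i == j then 1 else 0)) * (c * w i) * (c * w j))
     = \big[Rplus/0]_(j < n) ((a * c * c * w i * w i) * (w j * w j) + (c * c * c * w i) * (w j * (if j == i then 1 else 0))).
    apply: eq_bigr => j _; rewrite eq_sym; set d := (if j == i then 1 else 0); ring.
  rewrite sumR_split sumR_scal sumR_scal sumR_ind /s /vdot; ring.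
rewrite (eq_bigr _ (fun i _ => E i)) sumR_split sumR_scal sumR_scal -/(vdot w w) -/s; ring.
Qed.

Lemma vnorm_scal n (c : R) (w : Rn n) : vnorm (fun i => c * w i) = Rabs c * vnorm w.
Proof.
rewrite /vnorm.
have -> : vdot (fun i => c * w i) (fun i => c * w i) = (c * c) * vdot w w.
  by rewrite /vdot -sumR_scal; apply: eq_bigr => i _; ring.
rewrite sqrt_mult; [|nra|exact: vdot_ge0].
by rewrite -/(Rsqr c) sqrt_Rsqr_abs.
Qed.

Lemma sqrt_sum_le (d h : R) : 0 <= d -> 0 <= h -> sqrt (d * d + h * h) <= d + h.
Proof.
move=> Hd Hh; rewrite -(sqrt_square (d + h)); last lra.
apply: sqrt_le_1_alt; nra.
Qed.

Lemma ineq_grad (dl rh r h ep : R) :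
  0 < rh -> rh <= r -> 0 < h -> h <= dl * rh / 4 -> 0 < dl <= 1 -> 0 <= ep -> 2 * ep * r <= dl / 4 ->
  (1 + dl) / sqrt (r * r + h * h) * r - 2 * ep * r > 1.
Proof.
move=> Hrh Hr Hh Hh2 Hdl Hep Hepr.
set q := sqrt (r * r + h * h).
have Hq : 0 < q by apply: sqrt_lt_R0; nra.
have Hq2 : q <= r + h by apply: sqrt_sum_le; lra.
have Hh3 : h <= dl * r / 4 by nra.
have Hq3 : q <= r * (1 + dl / 4) by lra.
have Key : (1 + dl) * r > (1 + dl / 4) * (1 + dl / 4) * r by nra.
have : (1 + dl) / q * r >= (1 + dl) / (1 + dl / 4).
  apply: Rle_ge.
  have -> : (1 + dl) / q * r = ((1 + dl) * r) / q by field; lra.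
  apply: (Rmult_le_reg_r q) => //.
  have -> : (1 + dl) * r / q * q = (1 + dl) * r by field; lra.
  have -> : (1 + dl) / (1 + dl / 4) * q = q * ((1 + dl) / (1 + dl / 4)) by ring.
  have Hf : 0 < (1 + dl) / (1 + dl / 4) by apply: Rdiv_lt_0_compat; lra.
  apply: Rle_trans (_ : r * (1 + dl / 4) * ((1 + dl) / (1 + dl / 4)) <= _).
    by apply: Rmult_le_compat_r; lra.
  right; field; lra.
have : (1 + dl) / (1 + dl / 4) > 1 + dl / 4.
  apply: (Rmult_lt_reg_r (1 + dl / 4)); first lra.
  have -> : (1 + dl) / (1 + dl / 4) * (1 + dl / 4) = 1 + dl by field; lra.
  nra.
lra.
Qed.

Lemma ineq_conc (dl rh s h ep : R) :
  0 < rh -> rh * rh <= s -> 0 < h -> 0 < ep -> h <= rh * Rmin 1 (ep * rh / 2) -> 0 < dl <= 1 ->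
  - (1 + dl) / ((s + h * h) * sqrt (s + h * h)) * s + ((1 + dl) / sqrt (s + h * h) + - 2 * ep) < 0.
Proof.
move=> Hrh Hs Hh Hep Hh2 Hdl.
set z := s + h * h.
have Hz : 0 < z by rewrite /z; nra.
have Hsz : rh <= sqrt z.
  rewrite -(sqrt_square rh); last lra. apply: sqrt_le_1_alt; rewrite /z; nra.
have Hq : 0 < sqrt z by lra.
have E : - (1 + dl) / (z * sqrt z) * s + ((1 + dl) / sqrt z + - 2 * ep) =
  (1 + dl) * (h * h) / (z * sqrt z) - 2 * ep.
  clear -Hz Hq; rewrite /z in Hz Hq *; field; split; lra.
rewrite E.
have Hm1 := Rmin_l 1 (ep * rh / 2). have Hm2 := Rmin_r 1 (ep * rh / 2).
set m := Rmin 1 (ep * rh / 2) in Hh2 Hm1 Hm2.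
have Hm0 : 0 < m by rewrite /m; apply: Rmin_pos; nra.
have Hhh : h * h <= rh * rh * m.
  have : h * h <= (rh * m) * (rh * m) by nra.
  nra.
have Hhh2 : (1 + dl) * (h * h) <= ep * (rh * rh * rh).
  have : rh * rh * m <= rh * rh * (ep * rh / 2) by apply: Rmult_le_compat_l; nra.
  nra.
have Hzz : rh * rh * rh <= z * sqrt z.
  have : rh * rh <= z by rewrite /z; nra.
  move=> H; apply: Rle_trans (_ : rh * rh * sqrt z <= _); [apply: Rmult_le_compat_l; nra | nra].
have Hp : 0 < z * sqrt z by nra.
apply: Rle_lt_trans (_ : _ <= ep * (rh * rh * rh) / (z * sqrt z) - 2 * ep) _.
  apply: Rplus_le_compat_r.
  apply: Rmult_le_compat_r; [left; apply: Rinv_0_lt_compat => //| done].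
have : ep * (rh * rh * rh) / (z * sqrt z) <= ep.
  apply: (Rmult_le_reg_r (z * sqrt z)) => //.
  have -> : ep * (rh * rh * rh) / (z * sqrt z) * (z * sqrt z) = ep * (rh * rh * rh) by field; lra.
  nra.
lra.
Qed.

Lemma closure_sub n (Om : Rn n -> Prop) x : Om x -> closure Om x.
Proof. move=> Ox eps He; exists x; split => //; rewrite vdist_xx; lra. Qed.

Lemma closure_closed n (Om : Rn n -> Prop) x : closure (closure Om) x -> closure Om x.
Proof.
move=> H eps He.
have Hn := pos_INR n.
have He' : 0 < eps / (2 * (INR n + 1)) by apply: Rdiv_lt_0_compat; lra.
have [y [Cy Hy]] := H _ He'.
have [z [Oz Hz]] := Cy _ He'.
exists z; split => //.
apply: Rle_lt_trans (vdist_wtri z y x) _.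
have : INR n * (vdist z y + vdist y x) <= INR n * (2 * (eps / (2 * (INR n + 1)))).
  apply: Rmult_le_compat_l => //; lra.
have -> : INR n * (2 * (eps / (2 * (INR n + 1)))) = eps * (INR n / (INR n + 1)) by field; lra.
have : INR n / (INR n + 1) < 1.
  apply: (Rmult_lt_reg_r (INR n + 1)); first lra.
  have -> : INR n / (INR n + 1) * (INR n + 1) = INR n by field; lra.
  lra.
nra.
Qed.

Lemma bound_closure n (Om : Rn n -> Prop) M :
  (forall x, Om x -> vnorm x <= M) -> forall x, closure Om x -> forall i, Rabs (x i) <= M + 1.
Proof.
move=> HM x Cx i; have [y [Oy Hy]] := Cx 1 ltac:(lra).
have := coord_le_vnorm y i; have := HM y Oy; have := coord_le_vdist y x i.
split_Rabs; lra.
Qed.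

Lemma cont_on_minus n (U : Rn n -> Prop) (u g : Rn n -> R) :
  continuous_on U u -> gcont g -> continuous_on U (fun x => u x - g x).
Proof.
move=> Hu Hg x Ux eps He.
have [d1 [Hd1 H1]] := Hu x Ux (eps / 2) ltac:(lra).
have [d2 [Hd2 H2]] := Hg x (eps / 2) ltac:(lra).
exists (Rmin d1 d2); split; first exact: Rmin_pos.
move=> y Uy Hy.
have := H1 y Uy (Rlt_le_trans _ _ _ Hy (Rmin_l _ _)).
have := H2 y (Rlt_le_trans _ _ _ Hy (Rmin_r _ _)).
split_Rabs; lra.
Qed.

Lemma opE_pos n (Lam v : R) (xi : Rn n) X :
  0 < Lam -> v <= / Lam -> vnorm xi > 1 -> quadform X xi < 0 -> opE Lam v v xi X > 0.
Proof.
move=> HL Hv Hn Hq.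
have HLv : Lam * v <= 1.
  have := Rmult_le_compat_l _ _ _ (Rlt_le _ _ HL) Hv; rewrite Rinv_r; lra.
rewrite /opE; case: Rcase_abs => Hc /=.
  rewrite /opG; apply: Rlt_le_trans (Rmax_r _ _); lra.
case: Req_EM_T => Hz /=.
  rewrite /opH; lra.
rewrite /opF; apply: Rmin_glb_lt; last lra.
rewrite Rabs_right //; lra.
Qed.

Lemma claim1 n (Om : Rn n -> Prop) (Lam : R) (u : Rn n -> R) (M : R) :
  is_open Om -> is_convex Om -> smooth_boundary Om -> 0 < Lam ->
  continuous_on (closure Om) u -> visc_subsolution Lam Om u ->
  (forall x, Om x -> vnorm x <= M) ->
  (forall x, closure Om x -> u x <= / Lam) ->
  forall xb x0, closure Om xb -> 0 <= u xb -> Om x0 -> u x0 <= 0 -> vdist xb x0 >= u xb.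
Proof.
move=> Hop Hcv Hsb HL Hc Hsub HM Hmax xb x0 Cxb Hub Ox0 Hux0.
apply: Rnot_lt_ge => Hlt.
pose d := vdist xb x0.
have Hd0 : 0 <= d := vdist_ge0 _ _.
pose gam := u xb - d.
have Hgam : 0 < gam by rewrite /gam /d; lra.
pose K := closure Om.
have Cx0 : K x0 := closure_sub Ox0.
have HK : forall x, K x -> forall i, Rabs (x i) <= M + 1 := bound_closure HM.
have HM0 : 0 <= M by have := HM x0 Ox0; have := vnorm_ge0 x0; lra.
have Hn := pos_INR n.
pose Dd := INR n * (2 * (M + 1)) + 1.
have HDd0 : 1 <= Dd by rewrite /Dd; nra.
have HDd : forall x, K x -> vdist x x0 <= Dd.
  move=> x Kx; apply: Rle_trans (vdist_le_l1 _ _) _.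
  apply: Rle_trans (_ : \big[Rplus/0]_(i < n) (2 * (M + 1)) <= _).
    apply: sumR_le => i; have := HK x Kx i; have := HK x0 Cx0 i; split_Rabs; lra.
  rewrite sumR_const /Dd; lra.
have HSd : forall x, K x -> Sq x0 x <= Dd * Dd.
  move=> x Kx; rewrite Sq_vdist; have := HDd x Kx; have := vdist_ge0 x x0; nra.
have [rho0 [Hr0 Hrho0]] := Hc x0 Cx0 (gam / 4) ltac:(lra).
pose dl := Rmin 1 (gam / (8 * (Dd + 1))).
have Hdl1 : dl <= 1 := Rmin_l 1 (gam / (8 * (Dd + 1))).
have Hdl2 : dl <= gam / (8 * (Dd + 1)) := Rmin_r 1 (gam / (8 * (Dd + 1))).
have Hdl0 : 0 < dl by rewrite /dl; apply: Rmin_pos; [lra | apply: Rdiv_lt_0_compat; lra].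
have HdlD : dl * Dd <= gam / 8.
  have : dl * (8 * (Dd + 1)) <= gam.
    have := Rmult_le_compat_r (8 * (Dd + 1)) _ _ ltac:(lra) Hdl2.
    have -> : gam / (8 * (Dd + 1)) * (8 * (Dd + 1)) = gam by field; lra.
    done.
  nra.
pose ep := Rmin (dl / (8 * (Dd + 1))) (gam / (8 * (Dd * Dd + 1))).
have Hep1 : ep <= dl / (8 * (Dd + 1)) := Rmin_l (dl / (8 * (Dd + 1))) (gam / (8 * (Dd * Dd + 1))).
have Hep2 : ep <= gam / (8 * (Dd * Dd + 1)) := Rmin_r (dl / (8 * (Dd + 1))) (gam / (8 * (Dd * Dd + 1))).
have Hep0 : 0 < ep by rewrite /ep; apply: Rmin_pos; apply: Rdiv_lt_0_compat; nra.
have HepD : 2 * ep * Dd <= dl / 4.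
  have : ep * (8 * (Dd + 1)) <= dl.
    have := Rmult_le_compat_r (8 * (Dd + 1)) _ _ ltac:(lra) Hep1.
    have -> : dl / (8 * (Dd + 1)) * (8 * (Dd + 1)) = dl by field; lra.
    done.
  nra.
have HepD2 : ep * (Dd * Dd) <= gam / 8.
  have : ep * (8 * (Dd * Dd + 1)) <= gam.
    have := Rmult_le_compat_r (8 * (Dd * Dd + 1)) _ _ ltac:(nra) Hep2.
    have -> : gam / (8 * (Dd * Dd + 1)) * (8 * (Dd * Dd + 1)) = gam by field; nra.
    done.
  nra.
pose m1 := Rmin 1 (ep * rho0 / 2).
have Hm10 : 0 < m1 by rewrite /m1; apply: Rmin_pos; nra.
pose h := Rmin (gam / 16) (Rmin (dl * rho0 / 4) (rho0 * m1)).
have Hh1 : h <= gam / 16 := Rmin_l (gam / 16) (Rmin (dl * rho0 / 4) (rho0 * m1)).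
have Hh23 : h <= Rmin (dl * rho0 / 4) (rho0 * m1) := Rmin_r (gam / 16) (Rmin (dl * rho0 / 4) (rho0 * m1)).
have Hh2 : h <= dl * rho0 / 4 := Rle_trans _ _ _ Hh23 (Rmin_l (dl * rho0 / 4) (rho0 * m1)).
have Hh3 : h <= rho0 * m1 := Rle_trans _ _ _ Hh23 (Rmin_r (dl * rho0 / 4) (rho0 * m1)).
have Hh0 : 0 < h by rewrite /h; apply: Rmin_pos; [lra | apply: Rmin_pos; nra].
pose e := h * h.
have He0 : 0 < e by rewrite /e; nra.
pose A := 1 + dl.
pose phi := fun x => A * sqrt (Sq x0 x + e) + (- ep) * Sq x0 x.
have Hphi_lb : forall x, K x -> - (gam / 8) <= phi x.
  move=> x Kx; rewrite /phi.
  have HA : 0 <= A by rewrite /A; lra.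
  have H1 : 0 <= A * sqrt (Sq x0 x + e) by apply: Rmult_le_pos => //; exact: sqrt_pos.
  have H2 : ep * Sq x0 x <= ep * (Dd * Dd) by apply: Rmult_le_compat_l; [lra | exact: HSd].
  lra.
have Gphi : gcont phi.
  apply: gcont_plus; last exact: gcont_scal (gcont_Sq x0).
  apply: gcont_scal; apply: (gcont_comp1 (h := fun z => sqrt (z + e))); last exact: gcont_Sq.
  move=> x; apply: cont_sqrt_shift; have := Sq_ge0 x0 x; lra.
pose f := fun x => u x - phi x.
have [y [Ky Hy]] : exists y, K y /\ forall x, K x -> f x <= f y.
  apply: (evt (M := M + 1)) => //.
  - exact: closure_closed.
  - by exists x0.
  - exact: cont_on_minus.
  - exists (/ Lam + gam / 8) => x Kx; rewrite /f; have := Hmax x Kx; have := Hphi_lb x Kx; lra.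
have Hf_xb : 3 * gam / 4 <= f xb.
  have Hs : sqrt (Sq x0 xb + e) <= d + h.
    rewrite Sq_vdist -/d /e; apply: sqrt_sum_le; lra.
  have := Sq_ge0 x0 xb. have Hdd : d <= Dd by exact: HDd.
  rewrite /f /phi; move=> HS.
  have : A * sqrt (Sq x0 xb + e) <= A * (d + h) by apply: Rmult_le_compat_l; rewrite /A; lra.
  have : dl * d <= gam / 8 by nra.
  have HepS : 0 <= ep * Sq x0 xb by apply: Rmult_le_pos; lra.
  have HAh : (1 + dl) * h <= 2 * h by apply: Rmult_le_compat_r; lra.
  have E1 : (1 + dl) * (d + h) = d + dl * d + (1 + dl) * h by ring.
  rewrite /A /gam in Hgam Hh1 *.
  move=> H1 H2. lra.
have Hfar : rho0 <= vdist y x0.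
  apply: Rnot_lt_le => Hyx.
  have Efy : f y = u y - phi y by [].
  have := Hrho0 y Ky Hyx. have := Hy xb Cxb. have := Hphi_lb y Ky. split_Rabs; lra.
pose r := vdist y x0.
have Hfar2 : rho0 <= r := Hfar.
have Hr : 0 < r by lra.
pose s := Sq x0 y.
have Hs : s = r * r by rewrite /s Sq_vdist.
pose c := A / sqrt (s + e) + - 2 * ep.
pose a := - A / ((s + e) * sqrt (s + e)).
have Hgrad : c * r > 1.
  have Hdlb : 0 < dl <= 1 by split.
  have Hepr : 2 * ep * r <= dl / 4.
    have : ep * r <= ep * Dd by apply: Rmult_le_compat_l; [lra | exact: HDd].
    lra.
  have := ineq_grad Hr0 Hfar Hh0 Hh2 Hdlb (Rlt_le _ _ Hep0) Hepr.
  rewrite /c /A /e Hs -/r; lra.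
have Hc0 : 0 < c.
  apply: Rnot_le_lt => Hc0; have : c * r <= 0 by nra. lra.
have Hconc : a * s + c < 0.
  have Hrs : rho0 * rho0 <= s by rewrite Hs; apply: Rmult_le_compat; lra.
  have Hh3' : h <= rho0 * Rmin 1 (ep * rho0 / 2) := Hh3.
  have Hdlb : 0 < dl <= 1 by split.
  have := ineq_conc Hr0 Hrs Hh0 Hep0 Hh3' Hdlb.
  by rewrite /a /c /A /e.
pose C := f y.
pose Ph := Phi A e ep C x0 y.
pose w : Rn n := fun i => y i - x0 i.
have Hw : vdot w w = s by [].
have Hvw : vnorm w = r by [].
have Ephy : Ph y = u y by rewrite /Ph /Phi Sq_xx /C /f /phi; ring.
have Htouch : forall x, K x -> x <> y -> u x < Ph x.
  move=> x Kx Hxy.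
  have Hq : 0 < Sq y x.
    rewrite Sq_vdist; have := vdist_ge0 x y => H0.
    have : vdist x y <> 0 by move=> E; apply: Hxy; exact: vdist_eq0.
    move=> H1; have : 0 < vdist x y by lra. nra.
  have := Hy x Kx. rewrite /Ph /Phi /C /f /phi. nra.
have Exi : (fun i => DPhi A e ep x0 y i y) = (fun i => c * w i).
  by apply: functional_extensionality => i; rewrite DPhi_at.
have EX : (fun i j => D2Phi A e ep x0 y i j y) = (fun i j => a * w j * w i + c * (if i == j then 1 else 0)).
  by apply: functional_extensionality => i; apply: functional_extensionality => j; rewrite D2Phi_at.
have Hnorm : vnorm (fun i => DPhi A e ep x0 y i y) > 1.
  rewrite Exi vnorm_scal Hvw Rabs_right; lra.
have Hquad : quadform (fun i j => D2Phi A e ep x0 y i j y) (fun i => DPhi A e ep x0 y i y) < 0.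
  rewrite EX Exi quad_comp Hw.
  have : 0 < c * c * s by rewrite Hs; nra.
  nra.
have HE : opE Lam (u y) (Ph y) (fun i => DPhi A e ep x0 y i y) (fun i j => D2Phi A e ep x0 y i j y) > 0.
  rewrite Ephy; apply: opE_pos => //; exact: Hmax.
have [_ [Hint Hbd]] := Hsub.
case: (classic (Om y)) => Oy.
  have := Hint y Ph (DPhi A e ep x0 y) (D2Phi A e ep x0 y) Oy (@C2_Phi n Om A e ep C x0 y He0) Ephy
    (fun x Ox Hxy => Htouch x (closure_sub Ox) Hxy).
  lra.
have Bdy : boundary Om y by split => // eps He; exists y; split => //; rewrite vdist_xx.
have [r1 [rho [Drho Hld]]] := Hsb y Bdy.
pose g : Rn n := fun i => Drho i y.
have Hsign := normal_sign Hop Hcv Ox0 Oy Ky Hld.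
have Hg : 0 < vnorm g.
  apply: sqrt_lt_R0.
  have [_ [_ [_ [_ [i0 Hi0]]]]] := Hld.
  apply: Rlt_le_trans (_ : g i0 * g i0 <= _).
    have : g i0 <> 0 by []. move=> H; nra.
  rewrite /vdot; apply: (@sumR_term_le n (fun k => g k * g k) i0) => k; nra.
pose nu := vscal (/ vnorm g) g.
have Hnu : outer_unit_normal Om y nu by exists r1, rho, Drho.
have Hfull : is_open (fun _ : Rn n => True) by move=> x _; exists 1; split => //; lra.
have := Hbd y (fun _ => True) Ph (DPhi A e ep x0 y) (D2Phi A e ep x0 y) Bdy Hfull (fun _ _ => I)
  (@C2_Phi n (fun _ => True) A e ep C x0 y He0) Ephy Htouch nu Hnu.
have Hdot : vdot (fun i => DPhi A e ep x0 y i y) nu > 0.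
  rewrite Exi /vdot /nu /vscal.
  have -> : \big[Rplus/0]_(i < n) (c * w i * (/ vnorm g * g i)) =
    (c * / vnorm g) * \big[Rplus/0]_(i < n) (Drho i y * (y i - x0 i)).
    by rewrite -sumR_scal; apply: eq_bigr => i _; rewrite /w /g; ring.
  apply: Rmult_lt_0_compat => //; apply: Rmult_lt_0_compat => //; exact: Rinv_0_lt_compat.
move=> H; have := Rmin_glb_lt _ _ _ HE Hdot; lra.
Qed.

Unset Implicit Arguments.

Theorem mainTheorem11 (n : nat) (Omega : Rn n -> Prop) (Lam : R) (u : Rn n -> R) :
  is_open Omega -> is_bounded Omega -> is_convex Omega -> smooth_boundary Omega ->
  0 < Lam ->
  visc_solution Lam Omega u ->
  (exists x y, closure Omega x /\ closure Omega y /\ u x <> u y) ->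
  (forall x, closure Omega x -> u x <= / Lam) ->
  (exists x, closure Omega x /\ u x = / Lam) ->
  (forall x x0, closure Omega x -> 0 <= u x -> Omega x0 -> u x0 <= 0 ->
     vdist x x0 >= u x) /\
  (forall eps, 0 < eps ->
     exists x, closure (fun y => Omega y /\ u y > 0) x /\
       forall z, Omega z -> u z = 0 -> vdist x z >= / Lam - eps).
Proof.
move=> Hop [M HM] Hcv Hsb HL [Hc [Hsub _]] _ Hmax [xm [Cxm Hxm]].
have C1 := claim1 Hop Hcv Hsb HL Hc Hsub HM Hmax.
split => // eps Heps.
have HiL : 0 < / Lam by apply: Rinv_0_lt_compat.
exists xm; split.
  move=> et Het.
  have [d [Hd Hd2]] := Hc xm Cxm (/ Lam / 2) ltac:(lra).
  have [y [Oy Hy]] := Cxm (Rmin et d) (Rmin_pos _ _ Het Hd).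
  exists y; split.
    split => //.
    have := Hd2 y (closure_sub Oy) (Rlt_le_trans _ _ _ Hy (Rmin_r _ _)).
    rewrite Hxm; split_Rabs; lra.
  exact: Rlt_le_trans Hy (Rmin_l _ _).
move=> z Oz Hz.
have := C1 xm z Cxm ltac:(lra) Oz ltac:(lra).
lra.
Qed.
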